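(* Let $G$ be a second countable locally compact group, $\Omega$ a homogeneous space of $G$, $F$ a closed subgroup of $G$, and $y\in\Omega$ such that $\overline{Fy}$ is a compact $F$-minimal subset of $\Omega$ but $F/(F\cap G_y)$ is not compact (equivalently $Fy$ is not compact). Then the identity $e$ lies in the closure of $\{g\in G\setminus F: gy\in Fy\}$.
   Context: $G_y=\{h\in G: hy=y\}$ is the stabilizer of $y$. For a closed subgroup $F\subset G$, a closed $F$-invariant subset $Y\subset\Omega$ is called $F$-minimal if it contains no proper nonempty closed $F$-invariant subset, i.e. $Fy$ is dense in $Y$ for every $y\in Y$. *)

(* Defs.v *)
From Stdlib Require Import List Classical.

Definition is_topology {X : Type} (op : (X -> Prop) -> Prop) : Prop :=
  op (fun _ => True) /\
  (forall U V, op U -> op V -> op (fun x => U x /\ V x)) /\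
  (forall (I : Type) (U : I -> X -> Prop),
      (forall i, op (U i)) -> op (fun x => exists i, U i x)).

Definition is_closed {X : Type} (op : (X -> Prop) -> Prop) (A : X -> Prop) : Prop :=
  op (fun x => ~ A x).

Definition in_closure {X : Type} (op : (X -> Prop) -> Prop) (A : X -> Prop) (x : X) : Prop :=
  forall U, op U -> U x -> exists z, U z /\ A z.

Definition is_compact {X : Type} (op : (X -> Prop) -> Prop) (A : X -> Prop) : Prop :=
  forall (I : Type) (U : I -> X -> Prop),
    (forall i, op (U i)) -> (forall x, A x -> exists i, U i x) ->
    exists l : list I, forall x, A x -> exists i, In i l /\ U i x.

Definition hausdorff {X : Type} (op : (X -> Prop) -> Prop) : Prop :=
  forall x y, x <> y -> exists U V, op U /\ op V /\ U x /\ V y /\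
    forall z, U z -> V z -> False.

Definition locally_compact {X : Type} (op : (X -> Prop) -> Prop) : Prop :=
  forall x, exists U K, op U /\ U x /\ is_compact op K /\ forall z, U z -> K z.

Definition second_countable {X : Type} (op : (X -> Prop) -> Prop) : Prop :=
  exists B : nat -> X -> Prop, (forall n, op (B n)) /\
    forall U x, op U -> U x -> exists n, B n x /\ forall z, B n z -> U z.

Definition is_group {G : Type} (mul : G -> G -> G) (inv : G -> G) (e : G) : Prop :=
  (forall a b c, mul a (mul b c) = mul (mul a b) c) /\
  (forall a, mul e a = a) /\ (forall a, mul a e = a) /\
  (forall a, mul (inv a) a = e) /\ (forall a, mul a (inv a) = e).

Definition is_topological_group {G : Type} (opG : (G -> Prop) -> Prop)
  (mul : G -> G -> G) (inv : G -> G) (e : G) : Prop :=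
  is_topology opG /\ is_group mul inv e /\
  (forall a b U, opG U -> U (mul a b) ->
     exists V W, opG V /\ opG W /\ V a /\ W b /\
       forall v w, V v -> W w -> U (mul v w)) /\
  (forall U, opG U -> opG (fun g => U (inv g))).

Definition lcsc_group {G : Type} (opG : (G -> Prop) -> Prop)
  (mul : G -> G -> G) (inv : G -> G) (e : G) : Prop :=
  is_topological_group opG mul inv e /\ hausdorff opG /\
  locally_compact opG /\ second_countable opG.

Definition is_subgroup {G : Type} (mul : G -> G -> G) (inv : G -> G) (e : G)
  (F : G -> Prop) : Prop :=
  F e /\ (forall a b, F a -> F b -> F (mul a b)) /\ (forall a, F a -> F (inv a)).

Definition is_action {G O : Type} (mul : G -> G -> G) (e : G) (act : G -> O -> O) : Prop :=
  (forall x, act e x = x) /\ (forall g h x, act (mul g h) x = act g (act h x)).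

Definition stab {G O : Type} (act : G -> O -> O) (y : O) : G -> Prop :=
  fun g => act g y = y.

(* (O, act) is the homogeneous space G/H with H = G_{x0} a closed subgroup:
   the action is transitive, and O carries the quotient topology via g |-> g x0. *)
Definition homogeneous_space {G O : Type} (opG : (G -> Prop) -> Prop)
  (mul : G -> G -> G) (e : G) (opO : (O -> Prop) -> Prop) (act : G -> O -> O) (x0 : O) : Prop :=
  is_action mul e act /\
  (forall y, exists g, act g x0 = y) /\
  (forall U, opO U <-> opG (fun g => U (act g x0))) /\
  is_closed opG (stab act x0).

Definition orbit {G O : Type} (act : G -> O -> O) (F : G -> Prop) (y : O) : O -> Prop :=
  fun z => exists f, F f /\ act f y = z.

Definition F_invariant {G O : Type} (act : G -> O -> O) (F : G -> Prop) (Y : O -> Prop) : Prop :=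
  forall f z, F f -> Y z -> Y (act f z).

Definition F_minimal {G O : Type} (opO : (O -> Prop) -> Prop) (act : G -> O -> O)
  (F : G -> Prop) (Y : O -> Prop) : Prop :=
  is_closed opO Y /\ F_invariant act F Y /\
  forall Z : O -> Prop, (exists z, Z z) -> is_closed opO Z -> F_invariant act F Z ->
    (forall z, Z z -> Y z) -> forall z, Y z -> Z z.

(* F / H is compact (H a subgroup of F, quotient topology of the subspace topology on F):
   the projection F -> F/H is open, so this says every cover of F by open subsets of G
   has finitely many members U_i with F contained in the union of (U_i ∩ F) H. *)
Definition quotient_compact {G : Type} (opG : (G -> Prop) -> Prop) (mul : G -> G -> G)
  (F H : G -> Prop) : Prop :=
  forall (I : Type) (U : I -> G -> Prop),
    (forall i, opG (U i)) -> (forall f, F f -> exists i, U i f) ->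
    exists l : list I, forall f, F f ->
      exists i u h, In i l /\ U i u /\ F u /\ H h /\ f = mul u h.

(* Main.v *)
Require Import Defs.
From Stdlib Require Import List Classical FunctionalExtensionality PropExtensionality.

Lemma open_local {X : Type} (op : (X -> Prop) -> Prop) (Htop : is_topology op)
  (S : X -> Prop) :
  (forall x, S x -> exists V, op V /\ V x /\ forall z, V z -> S z) -> op S.
Proof.
  intros H. destruct Htop as [_ [_ Hu]].
  set (I := {V : X -> Prop | op V /\ forall z, V z -> S z}).
  assert (E : S = fun x => exists i : I, proj1_sig i x).
  { extensionality x; apply propositional_extensionality; split.
    - intros Sx. destruct (H x Sx) as [V [HV [Vx HVS]]].
      exists (exist _ V (conj HV HVS)). exact Vx.
    - intros [[V [HV HVS]] Vx]. exact (HVS x Vx). }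
  rewrite E. apply Hu. intros [V [HV HVS]]. exact HV.
Qed.

Lemma rtrans {G : Type} (opG : (G -> Prop) -> Prop) mul inv e
  (HT : is_topological_group opG mul inv e) (U : G -> Prop) c :
  opG U -> opG (fun g => U (mul g c)).
Proof.
  intros HU. destruct HT as [Htop [_ [Hc _]]].
  apply (open_local _ Htop). intros g Hg.
  destruct (Hc g c U HU Hg) as [V [W [HV [HW [Vg [Wc HVW]]]]]].
  exists V. split; [exact HV|]. split; [exact Vg|]. intros z Vz. apply HVW; auto.
Qed.

Lemma ltrans {G : Type} (opG : (G -> Prop) -> Prop) mul inv e
  (HT : is_topological_group opG mul inv e) (U : G -> Prop) c :
  opG U -> opG (fun g => U (mul c g)).
Proof.
  intros HU. destruct HT as [Htop [_ [Hc _]]].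
  apply (open_local _ Htop). intros g Hg.
  destruct (Hc c g U HU Hg) as [V [W [HV [HW [Vg [Wc HVW]]]]]].
  exists W. split; [exact HW|]. split; [exact Wc|]. intros z Wz. apply HVW; auto.
Qed.

Lemma img_open (G : Type) (opG : (G -> Prop) -> Prop) (mul : G -> G -> G) (inv : G -> G) (e : G)
  (HT : is_topological_group opG mul inv e)
  (O : Type) (opO : (O -> Prop) -> Prop) (act : G -> O -> O) (x0 : O)
  (HO : homogeneous_space opG mul e opO act x0) (y : O) (A : G -> Prop) :
  opG A -> opO (fun z => exists a, A a /\ act a y = z).
Proof.
  intros HA.
  destruct HO as [[Hact1 Hact2] [Htrans [HopO _]]].
  pose proof HT as [Htop [[Hass [Hel [Her [Hil Hir]]]] _]].
  apply HopO. destruct (Htrans y) as [g0 Hg0].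
  apply (open_local _ Htop). intros g [a [Aa Ha]].
  set (s := mul (inv g) (mul a g0)).
  exists (fun g' => A (mul (mul g' s) (inv g0))). split.
  { apply (rtrans _ _ _ _ HT (fun k => A (mul k (inv g0)))).
    apply (rtrans _ _ _ _ HT). exact HA. }
  assert (Hs : act s x0 = x0).
  { unfold s. rewrite Hact2, Hact2, Hg0, Ha, <- Hact2, Hil, Hact1. reflexivity. }
  split.
  - unfold s. rewrite Hass, Hir, Hel, <- Hass, Hir, Her. exact Aa.
  - intros z Hz. exists (mul (mul z s) (inv g0)). split; [exact Hz|].
    rewrite <- Hg0, <- Hact2, <- Hass, Hil, Her, Hact2, Hs. reflexivity.
Qed.

Lemma sub_closure {X : Type} (op : (X -> Prop) -> Prop) (A : X -> Prop) x :
  A x -> in_closure op A x.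
Proof. intros Ax U _ Ux. exists x. auto. Qed.

Theorem lemma3p4
  (G : Type) (opG : (G -> Prop) -> Prop) (mul : G -> G -> G) (inv : G -> G) (e : G)
  (HG : lcsc_group opG mul inv e)
  (O : Type) (opO : (O -> Prop) -> Prop) (act : G -> O -> O) (x0 : O)
  (HO : homogeneous_space opG mul e opO act x0)
  (F : G -> Prop) (HFsub : is_subgroup mul inv e F) (HFcl : is_closed opG F)
  (y : O)
  (Hcpt : is_compact opO (in_closure opO (orbit act F y)))
  (Hmin : F_minimal opO act F (in_closure opO (orbit act F y)))
  (Hnc : ~ quotient_compact opG mul F (fun h => F h /\ stab act y h)) :
  in_closure opG (fun g => ~ F g /\ orbit act F y (act g y)) e.
Proof.
  destruct HG as [HT _].
  pose proof HT as [Htop [[Hass [Hel [Her [Hil Hir]]]] _]].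
  pose proof Htop as [HtT [HtI HtU]].
  pose proof HO as [[Hact1 Hact2] [Htrans [HopO _]]].
  destruct HFsub as [Fe [FM FI]].
  destruct Hmin as [HYcl [HYinv HYmin]].
  set (Y := in_closure opO (orbit act F y)) in *.
  apply NNPP; intro Hn. apply Hnc.
  assert (HV0 : exists V0, opG V0 /\ V0 e /\
            forall g, V0 g -> orbit act F y (act g y) -> F g).
  { apply NNPP; intro H2; apply Hn; intros U HU Ue.
    apply NNPP; intro H3; apply H2; exists U; split; [exact HU|]; split; [exact Ue|].
    intros g Ug Og. apply NNPP; intro nF; apply H3; exists g; auto. }
  destruct HV0 as [V0 [HV0 [V0e HV0F]]].
  assert (C1 : forall v, V0 v -> Y (act v y) -> F v).
  { intros v Vv Yv. apply NNPP; intro nF.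
    assert (HA : opG (fun g => V0 g /\ ~ F g)) by (apply HtI; auto).
    destruct (Yv _ (img_open _ _ _ _ _ HT _ _ _ _ HO y _ HA)) as [z [[a [[Va nFa] Ha]] Oz]].
    { exists v; auto. }
    apply nFa. apply HV0F; auto. rewrite Ha. exact Oz. }
  assert (HtO : is_topology opO).
  { split; [|split].
    - apply HopO. exact HtT.
    - intros U V HU HV. apply HopO. apply HtI; apply HopO; auto.
    - intros I U HU. apply HopO. apply (HtU I (fun i g => U i (act g x0))).
      intros i. apply HopO. auto. }
  assert (C2 : forall z, Y z -> orbit act F y z).
  { intros z Yz. apply NNPP; intro nO.
    assert (Hcl : is_closed opO (fun x => Y x /\ ~ orbit act F y x)).
    { unfold is_closed. apply (open_local _ HtO). intros x Hx.
      destruct (classic (Y x)) as [Yx | nYx].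
      - assert (Ox : orbit act F y x) by (apply NNPP; intro; apply Hx; auto).
        destruct Ox as [f [Ff Hf]].
        exists (fun z => exists a, (fun g => V0 (mul (inv f) g)) a /\ act a y = z).
        split; [apply (img_open _ _ _ _ _ HT _ _ _ _ HO); apply (ltrans _ _ _ _ HT); exact HV0|].
        split.
        + exists f. rewrite Hil. auto.
        + intros w [a [Va Ha]] [Yw nOw]. apply nOw.
          assert (Fa' : F (mul (inv f) a)).
          { apply C1; [exact Va|]. rewrite Hact2, Ha. apply HYinv; auto. }
          exists (mul f (mul (inv f) a)). split; [apply FM; auto|].
          rewrite Hass, Hir, Hel. exact Ha.
      - exists (fun x => ~ Y x). split; [exact HYcl|]. split; [exact nYx|].
        intros w nYw [Yw _]. auto. }
    assert (Hinv : F_invariant act F (fun x => Y x /\ ~ orbit act F y x)).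
    { intros f w Ff [Yw nOw]. split; [apply HYinv; auto|].
      intros [f' [Ff' Hf']]. apply nOw. exists (mul (inv f) f'). split; [apply FM; auto|].
      rewrite Hact2, Hf', <- Hact2, Hil, Hact1. reflexivity. }
    assert (Yy : Y y) by (apply sub_closure; exists e; auto).
    destruct (HYmin _ (ex_intro _ z (conj Yz nO)) Hcl Hinv (fun x H => proj1 H) y Yy) as [_ H].
    apply H. exists e; auto. }
  intros I U HU Hcov.
  set (P := {p : G * I | F (fst p) /\ U (snd p) (fst p)}).
  set (N := fun (p : P) z => exists a,
        (fun g => U (snd (proj1_sig p)) g /\ V0 (mul (inv (fst (proj1_sig p))) g)) a
        /\ act a y = z).
  destruct (Hcpt P N) as [l Hl].
  { intros p. apply (img_open _ _ _ _ _ HT _ _ _ _ HO). apply HtI; [apply HU|].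
    apply (ltrans _ _ _ _ HT). exact HV0. }
  { intros x Yx. destruct (C2 x Yx) as [f [Ff Hf]].
    destruct (Hcov f Ff) as [i Ui].
    exists (exist _ (f, i) (conj Ff Ui)). exists f. simpl. rewrite Hil. auto. }
  exists (map snd (map (@proj1_sig _ _) l)).
  intros f' Ff'.
  destruct (Hl (act f' y)) as [[[f i] [Ff Ui]] [Inp [a [[Ua Va] Ha]]]].
  { apply sub_closure. exists f'. auto. }
  simpl in Ua, Va.
  assert (Fa' : F (mul (inv f) a)).
  { apply C1; [exact Va|]. apply sub_closure. exists (mul (inv f) f').
    split; [apply FM; auto|]. rewrite !Hact2, Ha. reflexivity. }
  assert (Fa : F a).
  { replace a with (mul f (mul (inv f) a)) by (rewrite Hass, Hir, Hel; reflexivity).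
    apply FM; auto. }
  exists i, a, (mul (inv a) f'). split; [|split; [exact Ua|split; [exact Fa|split]]].
  - apply (in_map snd (map (@proj1_sig _ _) l) (f, i)).
    apply (in_map (@proj1_sig _ _) l _ Inp).
  - split; [apply FM; auto|]. unfold stab. rewrite Hact2, <- Ha, <- Hact2, Hil, Hact1.
    reflexivity.
  - rewrite Hass, Hir, Hel. reflexivity.
Qed.
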